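(* For all $m,n\ge1$, $$F_{m+1}(x,y,q)F_{n+1}(xq^m,yq^m,q)=xq^mF_{m+n+1}(x,y,q)+y^2q^{2m-1}F_{m-1}(x,y,q)F_{n-1}(xq^{m+2},yq^{m+2},q).$$
   Context: $\Pi_n(13/2,123)$ is the set of layered matchings of $[n]$: set partitions whose blocks are consecutive intervals $[1,i_1]/\dots/[i_{k-1}+1,n]$, each of size $1$ or $2$. $\Pi_0(13/2,123)$ consists of the empty partition. For $\pi=B_1/\dots/B_k$ with $\min B_1<\dots<\min B_k$, $rb(\pi)$ is the number of pairs $(b,B_j)$ with $b\in B_i$, $j>i$, $\max B_j>b$. Let $s(\pi)$ and $d(\pi)$ be the numbers of blocks of size $1$ and $2$. Define $F_n(x,y,q)=\sum_{\pi\in\Pi_n(13/2,123)}x^{s(\pi)}y^{d(\pi)}q^{rb(\pi)}$, so $F_0=1$ and $F_1=x$. $F_n(xq^a,yq^a,q)$ denotes the substitution $x\mapsto xq^a$, $y\mapsto yq^a$. *)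

(* Defs.v *)
From HB Require Import structures.
From mathcomp Require Import all_boot all_order all_algebra.
Set Implicit Arguments. Unset Strict Implicit. Unset Printing Implicit Defensive.
Import GRing.Theory.

(* A set partition is represented as the list of its blocks B_1, ..., B_k,
   each block a list of elements of [n] = {1..n}, listed so that
   min B_1 < ... < min B_k. *)

Fixpoint comps12 (n : nat) : seq (seq nat) :=
  match n with
  | 0 => [:: [::]]
  | 1 => [:: [:: 1]]
  | (k.+1 as n').+1 =>
      [seq 1 :: c | c <- comps12 n'] ++ [seq 2 :: c | c <- comps12 k]
  end.

Fixpoint blocks_of (start : nat) (c : seq nat) : seq (seq nat) :=
  match c with
  | [::] => [::]
  | k :: c' => iota start k :: blocks_of (start + k) c'
  end.

(* Pi_n(13/2,123): layered matchings of [n]. *)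
Definition layered (n : nat) : seq (seq (seq nat)) :=
  [seq blocks_of 1 c | c <- comps12 n].

Definition maxB (B : seq nat) : nat := \max_(b <- B) b.

Definition rb (p : seq (seq nat)) : nat :=
  \sum_(i <- iota 0 (size p))
    \sum_(b <- nth [::] p i)
      count (fun j => b < maxB (nth [::] p j)) (iota i.+1 (size p - i.+1)).

Definition nsingles (p : seq (seq nat)) : nat := count (fun B => size B == 1) p.
Definition ndoubles (p : seq (seq nat)) : nat := count (fun B => size B == 2) p.

Definition F (R : comRingType) (n : nat) (x y q : R) : R :=
  (\sum_(p <- layered n) x ^+ nsingles p * y ^+ ndoubles p * q ^+ rb p)%R.

(* Main.v *)
Require Import Defs.
From mathcomp Require Import all_boot all_order all_algebra.
Import GRing.Theory.

Lemma iota1 n : iota 1 n = map S (iota 0 n).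
Proof. by rewrite (iotaDl 1 0). Qed.

Lemma count_nth_iota (P : pred (seq nat)) B p :
  count (fun j => P (nth [::] (B :: p) j)) (iota 1 (size p)) = count P p.
Proof.
rewrite iota1 count_map.
have -> : count (preim S (fun j => P (nth [::] (B :: p) j))) (iota 0 (size p))
        = count P (mkseq (nth [::] p) (size p)) by rewrite /mkseq count_map.
by rewrite mkseq_nth.
Qed.

Lemma rb_cons B p :
  rb (B :: p) = (\sum_(b <- B) count (fun C => b < maxB C) p + rb p)%N.
Proof.
rewrite /rb /= big_cons subn1 /=.
congr (_ + _)%N.
  by apply: eq_bigr => b _; exact: (count_nth_iota (fun C => b < maxB C)).
rewrite iota1 big_map; apply: eq_bigr => i _ /=.
apply: eq_bigr => b _.
rewrite subSS.
by rewrite -[i.+2]add1n iotaDl count_map.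
Qed.

Fixpoint rbc (c : seq nat) : nat :=
  match c with [::] => 0 | a :: c' => a * size c' + rbc c' end.

Lemma size_blocks t c : size (blocks_of t c) = size c.
Proof. by elim: c t => //= a c IH t; rewrite IH. Qed.

Lemma blocks_ge t c : all (fun k => 0 < k) c ->
  forall C, C \in blocks_of t c -> t <= maxB C.
Proof.
elim: c t => //= a c IH t /andP [a0 hc] C; rewrite inE => /orP [/eqP -> | hC].
  rewrite /maxB; apply: (@leq_bigmax_seq _ (iota t a) predT id t) => //.
  by rewrite mem_iota leqnn /= -{1}[t]addn0 ltn_add2l.
by apply: leq_trans (IH _ hc C hC); apply: leq_addr.
Qed.

Lemma rb_blocks s c : all (fun k => 0 < k) c -> rb (blocks_of s c) = rbc c.
Proof.
elim: c s => [s _|a c IH s /andP [a0 hc]]; first by rewrite /rb /= big_nil.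
rewrite /= rb_cons IH //; congr (_ + _).
rewrite big_seq (eq_bigr (fun _ => size c)).
  by rewrite -big_seq big_const_seq count_predT size_iota iter_addn_0 mulnC.
move=> b; rewrite mem_iota => /andP [_ hb].
have : all (fun C => b < maxB C) (blocks_of (s + a) c).
  apply/allP => C hC; exact: leq_trans hb (@blocks_ge _ _ hc _ hC).
by rewrite all_count size_blocks => /eqP.
Qed.

Lemma ns_blocks s c : nsingles (blocks_of s c) = count (pred1 1) c.
Proof. by elim: c s => //= a c IH s; rewrite IH size_iota. Qed.
Lemma nd_blocks s c : ndoubles (blocks_of s c) = count (pred1 2) c.
Proof. by elim: c s => //= a c IH s; rewrite -(IH (s+a)) size_iota. Qed.

Definition ok12 (c : seq nat) := all (fun k => (k == 1) || (k == 2)) c.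

Lemma comps12_ok n : forall c, c \in comps12 n -> ok12 c.
Proof.
suff: (forall c, c \in comps12 n -> ok12 c) /\ (forall c, c \in comps12 n.+1 -> ok12 c) by case.
elim: n => [|n [IH1 IH2]]; first by split => c; rewrite /= inE => /eqP ->.
split => // c; rewrite [comps12 _]/= mem_cat => /orP [] /mapP [d hd ->] /=.
  exact: IH2. exact: IH1.
Qed.

Lemma ok12_pos c : ok12 c -> all (fun k => 0 < k) c.
Proof. by elim: c => //= a c IH /andP [/orP [] /eqP -> /IH ->]. Qed.

Lemma ok12_size c : ok12 c -> size c = (count (pred1 1) c + count (pred1 2) c)%N.
Proof.
elim: c => //= a c IH /andP [/orP [] /eqP -> /IH ->] /=; by rewrite ?addnS.
Qed.

Local Open Scope ring_scope.

Definition W {R : comRingType} (c : seq nat) (X Y q : R) : R :=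
  X ^+ count (pred1 1%N) c * Y ^+ count (pred1 2%N) c * q ^+ rbc c.

Lemma F_W (R : comRingType) n (X Y q : R) :
  F n X Y q = \sum_(c <- comps12 n) W c X Y q.
Proof.
rewrite /F /layered big_map big_seq [RHS]big_seq; apply: eq_bigr => c hc.
by rewrite /W ns_blocks nd_blocks rb_blocks // ok12_pos // (@comps12_ok _ _ hc).
Qed.

Lemma F0 (R : comRingType) (X Y q : R) : F 0 X Y q = 1.
Proof. by rewrite F_W /= big_cons big_nil /W /= !expr0 !mulr1 addr0. Qed.

Lemma F1 (R : comRingType) (X Y q : R) : F 1 X Y q = X.
Proof. by rewrite F_W /= big_cons big_nil /W /= !expr0 expr1 !mulr1 addr0. Qed.

Lemma FS (R : comRingType) n (X Y q : R) :
  F n.+2 X Y q = X * F n.+1 (X * q) (Y * q) q + Y * F n (X * q ^+ 2) (Y * q ^+ 2) q.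
Proof.
rewrite !F_W.
have -> : comps12 n.+2 = [seq 1%N :: c | c <- comps12 n.+1] ++ [seq 2%N :: c | c <- comps12 n] by [].
rewrite big_cat !big_map !big_distrr.
congr (_ + _); rewrite big_seq [RHS]big_seq; apply: eq_bigr => c hc;
  rewrite /W /= (@ok12_size c (@comps12_ok _ _ hc)) !exprMn.
- rewrite add1n add0n mul1n exprS !exprD -!mulrA; congr (_ * (_ * _)).
  by rewrite mulrCA.
- rewrite add1n add0n exprS mulnDr !mul2n -!addnn !exprD -!mulrA.
  rewrite mulrCA; congr (_ * (_ * _)).
  by rewrite !(mulrCA _ (Y ^+ _)).
Qed.
Section Hsec.
Variables (R : comRingType) (x y q : R).
Definition H a n := F n (x * q ^+ a) (y * q ^+ a) q.

Lemma H0 a : H a 0 = 1. Proof. exact: F0. Qed.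
Lemma H1 a : H a 1 = x * q ^+ a. Proof. exact: F1. Qed.
Lemma HS a n : H a n.+2 = x * q ^+ a * H a.+1 n.+1 + y * q ^+ a * H a.+2 n.
Proof. by rewrite /H FS -!mulrA -!exprSr -!exprD !addn2. Qed.

Lemma concat m : forall a k, H a (m.+1 + k.+1) =
  H a m.+1 * H (a + m.+1) k.+1 + H a m * (y * q ^+ (a + m)) * H (a + m.+2) k.
Proof.
suff: (forall a k, H a (m.+1 + k.+1) =
  H a m.+1 * H (a + m.+1) k.+1 + H a m * (y * q ^+ (a + m)) * H (a + m.+2) k) /\
  (forall a k, H a (m.+2 + k.+1) =
  H a m.+2 * H (a + m.+2) k.+1 + H a m.+1 * (y * q ^+ (a + m.+1)) * H (a + m.+3) k)
  by case.
elim: m => [|p [IH1 IH2]].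
  split => a k.
    by rewrite add1n HS H1 H0 mul1r addn0 addn1 addn2.
  rewrite !addSn add0n HS (HS a.+1 k) (HS a 0) !H1 !H0 !mulr1 !addn1 !addn2 !addn3.
  by rewrite mulrDr !mulrDl !mulrA addrAC.
split => // a k.
have e : (p.+3 + k.+1 = (p.+1 + k.+1).+2)%N by rewrite !addSn.
rewrite e (HS a (p.+1 + k.+1)) (HS a p.+1) (HS a p) -addSn IH2 IH1.
rewrite !addSn !addnS.
by rewrite !mulrDr !mulrDl !mulrA addrACA.
Qed.

Lemma mainH m n :
  H 0 m.+2 * H m.+1 n.+2 =
  x * q ^+ m.+1 * H 0 (m.+1 + n.+1).+1
  + y ^+ 2 * q ^+ (2 * m.+1 - 1) * H 0 m * H m.+3 n.
Proof.
have e1 := concat m 0 0. have e2 := concat m 0 n.+1.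
rewrite !add0n addn1 H1 H0 mulr1 in e1. rewrite !add0n in e2.
rewrite -addnS e1 e2 (HS m.+1 n).
have -> : y ^+ 2 * q ^+ (2 * m.+1 - 1) = y * q ^+ m * (y * q ^+ m.+1).
  by rewrite mulrACA -expr2 -exprD mul2n doubleS subn1 /= addnS addnn.
move: (H 0 m.+1) (x * q ^+ m.+1) (H 0 m) (y * q ^+ m) (H m.+2 n.+1)
  (y * q ^+ m.+1) (H m.+3 n) => A u B v C w D.
rewrite mulrDl [u * (_ + _)]mulrDr -addrA; congr (_ + _).
  by rewrite [RHS]mulrCA mulrA.
rewrite mulrDr; congr (_ + _); first by rewrite mulrCA.
by rewrite mulrA (mulrC B v) -(mulrA v B w) (mulrC B w) mulrA.
Qed.
End Hsec.

Theorem theorem4p4 (R : comRingType) (m n : nat) (x y q : R) :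
  (1 <= m)%N -> (1 <= n)%N ->
  F m.+1 x y q * F n.+1 (x * q ^+ m) (y * q ^+ m) q =
  x * q ^+ m * F (m + n).+1 x y q
  + y ^+ 2 * q ^+ (2 * m - 1) * F (m - 1) x y q
    * F (n - 1) (x * q ^+ (m + 2)) (y * q ^+ (m + 2)) q.
Proof.
case: m => // m _; case: n => // n _.
have HF k : F k x y q = H R x y q 0 k by rewrite /H expr0 !mulr1.
have e1 : (m.+1 - 1 = m)%N by rewrite subn1.
have e2 : (n.+1 - 1 = n)%N by rewrite subn1.
rewrite !HF e1 e2 addn2.
exact: (mainH R x y q m n).
Qed.
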